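(* For all positive integers $N$ and $W$ there exists a real polynomial $F$ of degree $k$, where $k\le\left\lfloor\frac{16}{7}W^{1/4}\sqrt{N}\right\rfloor+4$, such that \[F(0)>W\sum_{i=1}^N|F(i)|.\] *)

(* Defs.v *)
From mathcomp Require Import all_boot all_order all_algebra.
From mathcomp Require Import reals.

(* Main.v *)
Require Import Defs.
From mathcomp Require Import all_boot all_order all_algebra.
From mathcomp Require Import reals.
From mathcomp Require Import ring lra zify.
Import Order.TTheory GRing.Theory Num.Theory.
Local Open Scope ring_scope.

Section Cheb.
Variable R : realType.
Variable S : {poly R}.

Fixpoint cheb (m : nat) : {poly R} * {poly R} * {poly R} :=
  match m with
  | 0%N => (1, 0, 0)
  | m'.+1 => let: (t, u, p) := cheb m' in
      ((1 - 2%:R *: S) * t - (4%:R *: S) * (1 - S) * u,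
       t + (1 - 2%:R *: S) * u,
       p + t + (2%:R *: (1 - S)) * u)
  end.

Lemma sizeM_le (a b : {poly R}) i j : (size a <= i)%N -> (size b <= j)%N ->
  (size (a * b)%R <= (i + j).-1)%N.
Proof.
move=> ha hb; apply: leq_trans (size_polyMleq a b) _.
rewrite -!subn1 leq_sub2r // leq_add //.
Qed.

Lemma sizeD_le (a b : {poly R}) n : (size a <= n)%N -> (size b <= n)%N ->
  (size (a + b)%R <= n)%N.
Proof. by move=> ha hb; apply: leq_trans (size_polyD a b) _; rewrite geq_max ha hb. Qed.

Lemma sizeB_le (a b : {poly R}) n : (size a <= n)%N -> (size b <= n)%N ->
  (size (a - b)%R <= n)%N.
Proof. by move=> ha hb; apply: sizeD_le; rewrite ?size_polyN. Qed.

Arguments sizeM_le {a b i j}.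
Hypothesis hS : (size S <= 2)%N.

Lemma size1 n : (size (1%R : {poly R}) <= n.+1)%N.
Proof. by rewrite size_poly1. Qed.

Lemma sizeZS (c : R) : (size (c *: S)%R <= 2)%N.
Proof. exact: leq_trans (size_scale_leq _ _) hS. Qed.

Lemma size_1S : (size (1 - S)%R <= 2)%N.
Proof. by apply: sizeB_le => //; apply: size1. Qed.

Lemma size_1ZS (c : R) : (size (1 - c *: S)%R <= 2)%N.
Proof. by apply: sizeB_le; [apply: size1 | apply: sizeZS]. Qed.

Lemma cheb_size m : let: (t, u, p) := cheb m in
  [/\ (size t <= m.+1)%N, (size u <= m)%N & (size p <= m)%N].
Proof.
elim: m => [|m IH] /=; first by rewrite size_poly1 size_poly0.
case: (cheb m) IH => [[t u] p] [ht hu hp]; split.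
- apply: sizeB_le.
  + by have := sizeM_le (size_1ZS 2%:R) ht.
  + have h1 := sizeM_le (sizeZS 4%:R) size_1S.
    by have := sizeM_le h1 hu; rewrite addSn.
- apply: sizeD_le; first exact: leq_trans ht _.
  by have := sizeM_le (size_1ZS 2%:R) hu.
- apply: sizeD_le; first apply: sizeD_le.
  + exact: leq_trans hp _.
  + exact: ht.
  + have h1 : (size (2%:R *: (1 - S))%R <= 2)%N.
      exact: leq_trans (size_scale_leq _ _) size_1S.
    by have := sizeM_le h1 hu.
Qed.

Lemma horner1' (x : R) : (1 : {poly R}).[x] = 1.
Proof. by rewrite -polyC1 hornerC. Qed.
Definition hE := (hornerD, hornerN, hornerC, hornerZ, hornerM, horner0, horner1').

Lemma cheb_val m x : let s := S.[x] in let: (t, u, p) := cheb m in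
  t.[x] ^+ 2 + 4%:R * s * (1 - s) * u.[x] ^+ 2 = 1 /\ s * p.[x] = (1 - t.[x]) / 2%:R.
Proof.
move=> s; elim: m => [|m IH] /=; first by rewrite horner0 hornerC expr0n /= mulr0 addr0 expr1n mulr0 subrr mul0r.
case: (cheb m) IH => [[t u] p] [h1 h2].
rewrite !hE -/s; split.
  by apply: (eq_trans _ h1); ring.
have -> : s * (p.[x] + t.[x] + 2%:R * (1 - s) * u.[x]) =
   s * p.[x] + (s * t.[x] + 2%:R * s * (1 - s) * u.[x]) by ring.
by rewrite h2; field.
Qed.

Lemma cheb_zero m x : S.[x] = 0 -> let: (t, u, p) := cheb m in
  t.[x] = 1 /\ u.[x] = m%:R /\ p.[x] = (m ^ 2)%:R.
Proof.
move=> h0; elim: m => [|m IH] /=; first by rewrite !hornerE.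
case: (cheb m) IH => [[t u] p] [h1 [h2 h3]].
rewrite !hE h0 h1 h2 h3; split; first ring.
split; first by rewrite -addn1 natrD; ring.
rewrite -addn1 !natrX natrD; ring.
Qed.
End Cheb.

Lemma sum_inv_sq (R : realType) n :
  \sum_(1 <= i < n.+2) ((i%:R : R)^-1) ^+ 2 <= 5%:R / 3%:R - 2%:R / (2 * n + 3)%N%:R.
Proof.
elim: n => [|n IH].
  rewrite big_nat1 invr1 expr1n muln0 add0n; lra.
rewrite big_nat_recr //=.
set A := \sum_(_ <= _ < _) _ in IH *.
have step : (((n.+2)%:R : R)^-1) ^+ 2 <= 2%:R / (2 * n + 3)%N%:R - 2%:R / (2 * n.+1 + 3)%N%:R.
  have -> : (2 * n.+1 + 3)%N = (2 * n + 5)%N by rewrite mulnS; lia.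
  rewrite -subr_ge0.
  have e : 2%:R / (2 * n + 3)%N%:R - 2%:R / (2 * n + 5)%N%:R - ((n.+2)%:R : R)^-1 ^+ 2
      = ((n.+2)%:R ^+ 2 * (2 * n + 3)%N%:R * (2 * n + 5)%N%:R)^-1.
    rewrite !natrD -[n.+2]addn2 natrD addr0; field.
    by apply/and3P; split; apply: lt0r_neq0; have := ler0n R n; lra.
  by rewrite e invr_ge0 !mulr_ge0 ?exprn_ge0 ?ler0n.
move: IH step; set X := 2%:R / _; set Y := 2%:R / _; move: X Y (_ ^+ 2) => X Y t; clearbody A; lra.
Qed.

Lemma term_bound (R : realType) (N i : nat) (p tt u : {poly R}) :
  (0 < i)%N -> (i <= N)%N ->
  let S := (N%:R)^-1 *: 'X in
  let s := S.[i%:R] in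
  tt.[i%:R] ^+ 2 + 4%:R * s * (1 - s) * u.[i%:R] ^+ 2 = 1 ->
  s * p.[i%:R] = (1 - tt.[i%:R]) / 2%:R ->
  `|(p * p).[i%:R]| <= (N%:R) ^+ 2 * ((i%:R)^-1) ^+ 2.
Proof.
move=> i0 iN S s h1 h2.
have N0 : (0 : R) < N%:R by rewrite ltr0n; apply: leq_trans iN.
have I0 : (0 : R) < i%:R by rewrite ltr0n.
have hs : s = i%:R / N%:R by rewrite /s /S hornerZ hornerX mulrC.
have s0 : 0 <= s by rewrite hs divr_ge0 // ltW.
have s1 : s <= 1 by rewrite hs ler_pdivrMr // mul1r ler_nat.
have hq : 0 <= 4%:R * s * (1 - s) * u.[i%:R] ^+ 2.
  apply: mulr_ge0; last exact: sqr_ge0.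
  apply: mulr_ge0; last by rewrite subr_ge0.
  by apply: mulr_ge0.
set a := tt.[i%:R] in h1 h2.
have a1 : a ^+ 2 <= 1 by lra.
have a2 : -1 <= a <= 1 by apply/andP; split; nra.
set q := s * p.[i%:R] in h2.
have q2 : q ^+ 2 <= 1 by rewrite h2; nra.
have hp : p.[i%:R] = q * (N%:R / i%:R).
  by rewrite /q hs; field; rewrite ?lt0r_neq0.
rewrite (hornerM p p) hp.
have -> : q * (N%:R / i%:R) * (q * (N%:R / i%:R)) = q ^+ 2 * (N%:R ^+ 2 * i%:R^-1 ^+ 2) by ring.
have C0 : 0 <= N%:R ^+ 2 * i%:R^-1 ^+ 2 :> R by rewrite mulr_ge0 ?sqr_ge0.
move: C0 q2; set C := _ * _; move: C => C C0 q2.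
rewrite ger0_norm; last by rewrite mulr_ge0 ?sqr_ge0.
nra.
Qed.

Theorem lemma4p5 (R : realType) (N W : nat) (hN : (0 < N)%N) (hW : (0 < W)%N) :
  exists (F : {poly R}) (k : nat),
    size F = k.+1 /\
    (k%:Z <= Num.floor ((16%:R / 7%:R) * Num.sqrt (Num.sqrt (W%:R : R)) * Num.sqrt (N%:R : R)) + 4)%R /\
    F.[0] > W%:R * \sum_(1 <= i < N.+1) `|F.[i%:R]|.
Proof.
set sW := Num.sqrt (Num.sqrt (W%:R : R)); set sN := Num.sqrt (N%:R : R).
have sW0 : 0 <= sW by apply: sqrtr_ge0.
have sN0 : 0 <= sN by apply: sqrtr_ge0.
have sW4 : sW ^+ 4 = W%:R.
  have -> : sW ^+ 4 = (sW ^+ 2) ^+ 2 by rewrite -exprM.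
  by rewrite !sqr_sqrtr ?sqrtr_ge0 ?ler0n.
have sN2 : sN ^+ 2 = N%:R by rewrite sqr_sqrtr ?ler0n.
set a := 8%:R / 7%:R * sW * sN.
have a0 : 0 <= a.
  by rewrite /a; apply: mulr_ge0 => //; apply: mulr_ge0 => //; apply: divr_ge0; apply: ler0n.
have /andP [ta1 ta2] := truncn_itv a0.
set t := Num.truncn a in ta1 ta2.
set m := t.+1.
set S : {poly R} := (N%:R)^-1 *: 'X.
have hS : (size S <= 2)%N by apply: leq_trans (size_scale_leq _ _) _; rewrite size_polyX.
have hsz := @cheb_size R S hS m.
have hz := @cheb_zero R S m 0.
have hv := @cheb_val R S m.
move: hsz hz hv; case: (cheb R S m) => [[tt u] p] [_ _ psz] hz hv.
have S0 : S.[0] = 0 by rewrite /S hornerZ hornerX mulr0.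
have [_ [_ p0]] := hz S0.
have F0 : (p * p).[0] = m%:R ^+ 4.
  by rewrite hornerM p0 natrX -exprD.
have Fnz : p * p != 0.
  apply/eqP => E; move: F0; rewrite E horner0 => /esym /eqP.
  by rewrite expf_eq0 /= pnatr_eq0.
have sp : (0 < size (p * p)%R)%N by rewrite size_poly_gt0.
exists (p * p), (size (p * p)).-1; split; first by rewrite prednK.
split.
  have hk : ((size (p * p)%R).-1 <= 2 * t)%N.
    have := @sizeM_le R p p m m psz psz; rewrite /m; lia.
  apply: (le_trans (y := (2 * t)%N%:Z)); first by rewrite lez_nat.
  apply: (le_trans (y := Num.floor (16%:R / 7%:R * sW * sN))); last first.
    by rewrite lerDl.
  rewrite floor_ge_int pmulrn.
  have -> : 16%:R / 7%:R * sW * sN = 2%:R * a.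
    by rewrite /a; field.
  change (((2 * t)%N%:R : R) <= 2%:R * a).
  by rewrite natrM ler_pM2l ?ltr0n.
have N0 : (0 : R) < N%:R by rewrite ltr0n.
have hsum : \sum_(1 <= i < N.+1) `|(p * p).[i%:R]| <= N%:R ^+ 2 * (5%:R / 3%:R).
  apply: (le_trans (y := \sum_(1 <= i < N.+1) N%:R ^+ 2 * ((i%:R)^-1) ^+ 2)).
    apply: ler_sum_nat => i /andP [i1 iN]; rewrite ltnS in iN.
    have [h1 h2] := hv i%:R.
    exact: (@term_bound R N i p tt u i1 iN h1 h2).
  rewrite -mulr_sumr ler_pM2l ?exprn_gt0 //.
  have := sum_inv_sq R N.-1; rewrite prednK //.
  have : 0 <= 2%:R / ((2 * N.-1 + 3)%N%:R : R) by rewrite divr_ge0 ?ler0n.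
  move: (2%:R / _) => X; lra.
rewrite F0.
have hW0 : (0 : R) < W%:R by rewrite ltr0n.
have a4 : a ^+ 4 = 4096%:R / 2401%:R * (W%:R * N%:R ^+ 2).
  rewrite /a !exprMn sW4.
  have -> : sN ^+ 4 = (sN ^+ 2) ^+ 2 by rewrite -exprM.
  by rewrite sN2; field.
have am : a ^+ 4 < m%:R ^+ 4 by rewrite ltrXn2r.
apply: (le_lt_trans (y := W%:R * (N%:R ^+ 2 * (5%:R / 3%:R)))).
  by rewrite ler_wpM2l // ltW.
apply: lt_trans am; rewrite a4.
have P0 : (0 : R) < W%:R * N%:R ^+ 2 by rewrite mulr_gt0 // exprn_gt0.
have -> : W%:R * (N%:R ^+ 2 * (5%:R / 3%:R)) = 5%:R / 3%:R * (W%:R * N%:R ^+ 2) :> R by ring.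
move: P0; move: (W%:R * _) => P; lra.
Qed.
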